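(* The plane cannot be tiled by copies of the tooth alone, where the tooth is the $9$-omino consisting of a central unit square together with two unit squares extending in a straight line from it in each of the four directions (up, down, left, right).
   Context: The tooth is the plus-shaped $9$-omino: with centre square $[0,1]\times[0,1]$, it consists of the squares $[i,i+1]\times[0,1]$ for $i\in\{-2,-1,0,1,2\}$ and $[0,1]\times[j,j+1]$ for $j\in\{-2,-1,1,2\}$. A tiling of the plane by copies of a polyomino is a covering of $\mathbb{R}^2$ by copies with pairwise disjoint interiors. *)

(* Defs.v *)
From Stdlib Require Import Reals.
Open Scope R_scope.

Definition point := (R * R)%type.

Definition dist2 (p q : point) : R :=
  (fst p - fst q) ^ 2 + (snd p - snd q) ^ 2.

Definition unit_square (a b : R) (p : point) : Prop :=
  a <= fst p <= a + 1 /\ b <= snd p <= b + 1.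

Definition tooth (p : point) : Prop :=
  unit_square (-2) 0 p \/ unit_square (-1) 0 p \/ unit_square 0 0 p \/
  unit_square 1 0 p \/ unit_square 2 0 p \/
  unit_square 0 (-2) p \/ unit_square 0 (-1) p \/
  unit_square 0 1 p \/ unit_square 0 2 p.

Definition isometry (f : point -> point) : Prop :=
  forall p q, dist2 (f p) (f q) = dist2 p q.

Definition image (f : point -> point) (A : point -> Prop) (p : point) : Prop :=
  exists q, A q /\ f q = p.

Definition interior (A : point -> Prop) (p : point) : Prop :=
  exists eps, 0 < eps /\ forall q, dist2 p q < eps ^ 2 -> A q.

Definition tiles_plane (tile : point -> Prop) : Prop :=
  exists (I : Type) (f : I -> point -> point),
    (forall i, isometry (f i)) /\
    (forall p, exists i, image (f i) tile p) /\
    (forall i j p, i <> j ->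
       interior (image (f i) tile) p -> interior (image (f j) tile) p -> False).

(* Main.v *)
Require Import Defs.
From Stdlib Require Import Reals Lra Lia Psatz ZArith Classical ClassicalEpsilon.
Open Scope R_scope.

Definition isaff (f : point -> point) (b1 b2 u1 u2 v1 v2 : R) : Prop :=
  u1*u1+u2*u2 = 1 /\ v1*v1+v2*v2 = 1 /\ u1*v1+u2*v2 = 0 /\
  forall p, f p = (b1 + fst p * u1 + snd p * v1, b2 + fst p * u2 + snd p * v2).

Lemma rows_of_cols u1 u2 v1 v2 : u1*u1+u2*u2 = 1 -> v1*v1+v2*v2 = 1 -> u1*v1+u2*v2 = 0 ->
  u1*u1+v1*v1 = 1 /\ u2*u2+v2*v2 = 1 /\ u1*u2+v1*v2 = 0.
Proof.
  intros Hu Hv Huv.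
  assert (E1 : u1*u1 = v2*v2).
  { assert (u1*v1*(u1*v1) = u2*v2*(u2*v2)) by (replace (u1*v1) with (-(u2*v2)) by lra; ring).
    nra. }
  assert (E2 : u2*u2 = v1*v1) by nra.
  split; [lra|split; [lra|]].
  set (s := u1*u2+v1*v2).
  assert (A1 : u1 * s = 0).
  { unfold s. replace (u1 * (u1 * u2 + v1 * v2)) with (u2*(u1*u1) + v2*(u1*v1)) by ring.
    replace (u1*v1) with (-(u2*v2)) by lra. rewrite E1. ring. }
  assert (A2 : u2 * s = 0).
  { unfold s. replace (u2 * (u1 * u2 + v1 * v2)) with (u1*(u2*u2) + v1*(u2*v2)) by ring.
    replace (u2*v2) with (-(u1*v1)) by lra. rewrite E2. ring. }
  replace s with (u1*(u1*s) + u2*(u2*s)) by (replace (u1*(u1*s)+u2*(u2*s)) with ((u1*u1+u2*u2)*s) by ring; rewrite Hu; ring).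
  rewrite A1, A2; ring.
Qed.

Lemma iso_aff f : isometry f -> exists b1 b2 u1 u2 v1 v2, isaff f b1 b2 u1 u2 v1 v2.
Proof.
  intros Hf.
  pose proof (Hf (1,0) (0,0)) as H1. pose proof (Hf (0,1) (0,0)) as H2.
  pose proof (Hf (1,0) (0,1)) as H3.
  unfold dist2 in *; simpl in H1, H2, H3.
  destruct (f (0,0)) as [b1 b2] eqn:E0. destruct (f (1,0)) as [e1 e2] eqn:E1.
  destruct (f (0,1)) as [g1 g2] eqn:E2. simpl in *.
  exists b1, b2, (e1-b1), (e2-b2), (g1-b1), (g2-b2).
  assert (Hu : (e1-b1)*(e1-b1)+(e2-b2)*(e2-b2) = 1) by nra.
  assert (Hv : (g1-b1)*(g1-b1)+(g2-b2)*(g2-b2) = 1) by nra.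
  assert (Huv : (e1-b1)*(g1-b1)+(e2-b2)*(g2-b2) = 0) by nra.
  destruct (rows_of_cols _ _ _ _ Hu Hv Huv) as [R1 [R2 R3]].
  split; [exact Hu|split; [exact Hv|split; [exact Huv|]]].
  intros [x y]. simpl.
  pose proof (Hf (x,y) (0,0)) as G1. pose proof (Hf (x,y) (1,0)) as G2.
  pose proof (Hf (x,y) (0,1)) as G3.
  rewrite E0 in G1. rewrite E1 in G2. rewrite E2 in G3.
  unfold dist2 in G1, G2, G3; simpl in G1, G2, G3.
  destruct (f (x,y)) as [w1 w2]. simpl in *.
  assert (Du : (w1-b1)*(e1-b1) + (w2-b2)*(e2-b2) = x) by nra.
  assert (Dv : (w1-b1)*(g1-b1) + (w2-b2)*(g2-b2) = y) by nra.
  set (u1 := e1-b1) in *. set (u2 := e2 - b2) in *. set (v1 := g1 - b1) in *. set (v2 := g2 - b2) in *.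
  set (d1 := w1 - b1) in *. set (d2 := w2 - b2) in *.
  f_equal.
  - rewrite <- Du, <- Dv. replace w1 with (b1 + d1) by (unfold d1; ring).
    transitivity (b1 + d1*(u1*u1+v1*v1) + d2*(u1*u2+v1*v2)); [rewrite R1, R3; ring | ring].
  - rewrite <- Du, <- Dv. replace w2 with (b2 + d2) by (unfold d2; ring).
    transitivity (b2 + d2*(u2*u2+v2*v2) + d1*(u1*u2+v1*v2)); [rewrite R2, R3; ring | ring].
Qed.
Definition finv (b1 b2 u1 u2 v1 v2 : R) (w : point) : point :=
  ((fst w - b1)*u1 + (snd w - b2)*u2, (fst w - b1)*v1 + (snd w - b2)*v2).

Lemma aff_finv_l f b1 b2 u1 u2 v1 v2 w : isaff f b1 b2 u1 u2 v1 v2 -> f (finv b1 b2 u1 u2 v1 v2 w) = w.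
Proof.
  intros [Hu [Hv [Huv Hf]]]. destruct (rows_of_cols _ _ _ _ Hu Hv Huv) as [R1 [R2 R3]].
  rewrite Hf. destruct w as [w1 w2]; unfold finv; simpl. f_equal.
  - transitivity (b1 + (w1-b1)*(u1*u1+v1*v1) + (w2-b2)*(u1*u2+v1*v2)); [ring | rewrite R1, R3; ring].
  - transitivity (b2 + (w2-b2)*(u2*u2+v2*v2) + (w1-b1)*(u1*u2+v1*v2)); [ring | rewrite R2, R3; ring].
Qed.

Lemma aff_finv_r f b1 b2 u1 u2 v1 v2 p : isaff f b1 b2 u1 u2 v1 v2 -> finv b1 b2 u1 u2 v1 v2 (f p) = p.
Proof.
  intros [Hu [Hv [Huv Hf]]]. rewrite Hf. destruct p as [x y]; unfold finv; simpl. f_equal.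
  - transitivity (x*(u1*u1+u2*u2) + y*(u1*v1+u2*v2)); [ring | rewrite Hu, Huv; ring].
  - transitivity (y*(v1*v1+v2*v2) + x*(u1*v1+u2*v2)); [ring | rewrite Hv, Huv; ring].
Qed.

Lemma aff_dist f b1 b2 u1 u2 v1 v2 p q : isaff f b1 b2 u1 u2 v1 v2 -> dist2 (f p) (f q) = dist2 p q.
Proof.
  intros [Hu [Hv [Huv Hf]]]. rewrite !Hf. destruct p as [x y], q as [x' y']; unfold dist2; simpl.
  transitivity ((x-x')^2*(u1*u1+u2*u2) + (y-y')^2*(v1*v1+v2*v2) + 2*(x-x')*(y-y')*(u1*v1+u2*v2)); [ring|].
  rewrite Hu, Hv, Huv; ring.
Qed.

Lemma finv_dist f b1 b2 u1 u2 v1 v2 p q : isaff f b1 b2 u1 u2 v1 v2 ->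
  dist2 (finv b1 b2 u1 u2 v1 v2 p) (finv b1 b2 u1 u2 v1 v2 q) = dist2 p q.
Proof.
  intros H. rewrite <- (aff_dist _ _ _ _ _ _ _ (finv b1 b2 u1 u2 v1 v2 p) (finv b1 b2 u1 u2 v1 v2 q) H).
  rewrite !(aff_finv_l _ _ _ _ _ _ _ _ H). reflexivity.
Qed.

Lemma image_aff f b1 b2 u1 u2 v1 v2 A p : isaff f b1 b2 u1 u2 v1 v2 ->
  (image f A p <-> A (finv b1 b2 u1 u2 v1 v2 p)).
Proof.
  intros H. split.
  - intros [q [Aq Eq]]. subst p. rewrite (aff_finv_r _ _ _ _ _ _ _ _ H). exact Aq.
  - intros Ap. exists (finv b1 b2 u1 u2 v1 v2 p). split; [exact Ap| apply (aff_finv_l _ _ _ _ _ _ _ _ H)].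
Qed.

Definition Tiling (I : Type) (f : I -> point -> point) : Prop :=
    (forall i, isometry (f i)) /\
    (forall p, exists i, image (f i) tooth p) /\
    (forall i j p, i <> j ->
       Defs.interior (image (f i) tooth) p -> Defs.interior (image (f j) tooth) p -> False).

Lemma normalize (I : Type) (f : I -> point -> point) (i0 : I) : Tiling I f ->
  exists h : I -> point -> point, Tiling I h /\ forall p, image (h i0) tooth p <-> tooth p.
Proof.
  intros [Hiso [Hcov Hdis]].
  destruct (iso_aff _ (Hiso i0)) as [b1 [b2 [u1 [u2 [v1 [v2 Hg]]]]]].
  set (g := f i0) in *.
  set (gi := finv b1 b2 u1 u2 v1 v2).
  exists (fun j p => gi (f j p)). split; [split; [|split]|].
  - intros j p q. unfold gi. rewrite (finv_dist _ _ _ _ _ _ _ _ _ Hg). apply Hiso.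
  - intros p. destruct (Hcov (g p)) as [j [q [Tq Eq]]]. exists j. exists q. split; [exact Tq|].
    rewrite Eq. unfold gi. apply (aff_finv_r _ _ _ _ _ _ _ _ Hg).
  - intros i j p Hij Hi Hj. apply (Hdis i j (g p) Hij).
    + destruct Hi as [e [He Hb]]. exists e. split; [exact He|]. intros q Hq.
      destruct (Hb (gi q)) as [r [Tr Er]].
      { rewrite <- (aff_dist _ _ _ _ _ _ _ p (gi q) Hg). unfold gi. rewrite (aff_finv_l _ _ _ _ _ _ _ _ Hg). exact Hq. }
      exists r. split; [exact Tr|]. rewrite <- (aff_finv_l _ _ _ _ _ _ _ q Hg). fold gi. rewrite <- Er.
      symmetry. apply (aff_finv_l _ _ _ _ _ _ _ _ Hg).
    + destruct Hj as [e [He Hb]]. exists e. split; [exact He|]. intros q Hq.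
      destruct (Hb (gi q)) as [r [Tr Er]].
      { rewrite <- (aff_dist _ _ _ _ _ _ _ p (gi q) Hg). unfold gi. rewrite (aff_finv_l _ _ _ _ _ _ _ _ Hg). exact Hq. }
      exists r. split; [exact Tr|]. rewrite <- (aff_finv_l _ _ _ _ _ _ _ q Hg). fold gi. rewrite <- Er.
      symmetry. apply (aff_finv_l _ _ _ _ _ _ _ _ Hg).
  - intros p. split.
    + intros [q [Tq Eq]]. unfold gi in Eq. fold g in Eq. rewrite (aff_finv_r _ _ _ _ _ _ _ _ Hg) in Eq. subst. exact Tq.
    + intros Tp. exists p. split; [exact Tp|]. unfold gi. apply (aff_finv_r _ _ _ _ _ _ _ _ Hg).
Qed.
Definition tcell (i j : Z) : Prop := ((j = 0 /\ -2 <= i <= 2) \/ (i = 0 /\ -2 <= j <= 2))%Z.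

Lemma Zeq_of_R (m a : Z) (x : R) : IZR m <= x <= IZR m + 1 -> IZR a < x < IZR a + 1 -> m = a.
Proof.
  intros H1 H2.
  assert (A : (m < a + 1)%Z) by (apply lt_IZR; rewrite plus_IZR; simpl; lra).
  assert (B : (a < m + 1)%Z) by (apply lt_IZR; rewrite plus_IZR; simpl; lra).
  lia.
Qed.

Lemma us_cell (m n a b : Z) w : unit_square (IZR m) (IZR n) w ->
  IZR a < fst w < IZR a + 1 -> IZR b < snd w < IZR b + 1 -> m = a /\ n = b.
Proof. intros [H1 H2] Ha Hb. split; eapply Zeq_of_R; eauto. Qed.

Lemma open_cell_tcell w (a b : Z) : tooth w ->
  IZR a < fst w < IZR a + 1 -> IZR b < snd w < IZR b + 1 -> tcell a b.
Proof.
  intros Ht Ha Hb. unfold tcell.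
  destruct Ht as [H|[H|[H|[H|[H|[H|[H|[H|H]]]]]]]];
  destruct (us_cell _ _ _ _ _ H Ha Hb); subst; lia.
Qed.

Definition hb (w : point) : Prop := -2 < fst w < 3 /\ 0 < snd w < 1.
Definition vb (w : point) : Prop := 0 < fst w < 1 /\ -2 < snd w < 3.

Lemma hb_tooth w : hb w -> tooth w.
Proof. unfold hb, tooth, unit_square. intros. lra. Qed.
Lemma vb_tooth w : vb w -> tooth w.
Proof. unfold vb, tooth, unit_square. intros. lra. Qed.

Lemma sq_bound (a b e : R) : a*a + b*b < e*e -> 0 < e -> -e < a < e /\ -e < b < e.
Proof. intros H He. split; split; nra. Qed.

Lemma dist2_e p q : dist2 p q = (fst p - fst q)*(fst p - fst q) + (snd p - snd q)*(snd p - snd q).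
Proof. unfold dist2. ring. Qed.

Lemma box_ball (a b c d : R) w : a < fst w < b -> c < snd w < d ->
  exists e, 0 < e /\ forall q, dist2 w q < e^2 -> a < fst q < b /\ c < snd q < d.
Proof.
  intros H1 H2. exists (Rmin (Rmin (fst w - a) (b - fst w)) (Rmin (snd w - c) (d - snd w))).
  assert (P : 0 < Rmin (Rmin (fst w - a) (b - fst w)) (Rmin (snd w - c) (d - snd w))).
  { repeat apply Rmin_pos; lra. }
  split; [exact P|]. intros q Hq. rewrite dist2_e in Hq.
  set (e := Rmin (Rmin (fst w - a) (b - fst w)) (Rmin (snd w - c) (d - snd w))) in *.
  assert (e <= fst w - a /\ e <= b - fst w /\ e <= snd w - c /\ e <= d - snd w) as [E1 [E2 [E3 E4]]].
  { unfold e. repeat split.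
    - eapply Rle_trans; [apply Rmin_l|apply Rmin_l].
    - eapply Rle_trans; [apply Rmin_l|apply Rmin_r].
    - eapply Rle_trans; [apply Rmin_r|apply Rmin_l].
    - eapply Rle_trans; [apply Rmin_r|apply Rmin_r]. }
  simpl in Hq. rewrite Rmult_1_r in Hq.
  destruct (sq_bound _ _ _ Hq P) as [B1 B2]. lra.
Qed.

Lemma int_open (A : point -> Prop) q : Defs.interior A q ->
  exists e, 0 < e /\ forall q', dist2 q q' < e^2 -> Defs.interior A q'.
Proof.
  intros [e [He Hb]]. exists (e/2). split; [lra|]. intros q' Hq'.
  exists (e/2). split; [lra|]. intros z Hz. apply Hb.
  rewrite dist2_e in *. simpl in *. rewrite Rmult_1_r in *.
  set (a1 := fst q - fst q') in *. set (a2 := snd q - snd q') in *.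
  set (b1 := fst q' - fst z) in *. set (b2 := snd q' - snd z) in *.
  try replace (fst q - fst z) with (a1 + b1) by (unfold a1, b1; ring).
  try replace (snd q - snd z) with (a2 + b2) by (unfold a2, b2; ring).
  clearbody a1 a2 b1 b2.
  assert (0 <= (a1-b1)*(a1-b1)) by (apply Rle_0_sqr).
  assert (0 <= (a2-b2)*(a2-b2)) by (apply Rle_0_sqr).
  clear Hb. nra.
Qed.

Definition aligned (I : Type) (f : I -> point -> point) (j : I) (X Y : Z) : Prop :=
  forall p, image (f j) tooth p <-> tooth (fst p - IZR X, snd p - IZR Y).

Lemma int_bar I f j X Y p : aligned I f j X Y ->
  (hb (fst p - IZR X, snd p - IZR Y) \/ vb (fst p - IZR X, snd p - IZR Y)) ->
  Defs.interior (image (f j) tooth) p.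
Proof.
  intros Ha [H|H].
  - destruct H as [H1 H2]. destruct (box_ball _ _ _ _ _ H1 H2) as [e [He Hb]].
    exists e. split; [exact He|]. intros q Hq. apply Ha. apply hb_tooth.
    apply Hb. unfold dist2 in *. simpl. replace (fst p - IZR X - (fst q - IZR X)) with (fst p - fst q) by ring.
    replace (snd p - IZR Y - (snd q - IZR Y)) with (snd p - snd q) by ring. exact Hq.
  - destruct H as [H1 H2]. destruct (box_ball _ _ _ _ _ H1 H2) as [e [He Hb]].
    exists e. split; [exact He|]. intros q Hq. apply Ha. apply vb_tooth.
    apply Hb. unfold dist2 in *. simpl. replace (fst p - IZR X - (fst q - IZR X)) with (fst p - fst q) by ring.
    replace (snd p - IZR Y - (snd q - IZR Y)) with (snd p - snd q) by ring. exact Hq.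
Qed.

Lemma tcell_bar (i j : Z) : tcell i j -> hb (IZR i + /2, IZR j + /2) \/ vb (IZR i + /2, IZR j + /2).
Proof.
  unfold tcell, hb, vb; simpl. intros [[H1 [H2 H3]]|[H1 [H2 H3]]]; subst.
  - left. apply IZR_le in H2. apply IZR_le in H3. lra.
  - right. apply IZR_le in H2. apply IZR_le in H3. lra.
Qed.

Lemma cell_center_shift (a b X Y : Z) :
  (IZR a + /2 - IZR X, IZR b + /2 - IZR Y) = (IZR (a - X) + /2, IZR (b - Y) + /2).
Proof. rewrite !minus_IZR. f_equal; ring. Qed.

Lemma L_same I f j k X Y X' Y' a b : Tiling I f -> aligned I f j X Y -> aligned I f k X' Y' ->
  tcell (a - X) (b - Y) -> tcell (a - X') (b - Y') -> j = k.
Proof.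
  intros [_ [_ Hdis]] Hj Hk C1 C2. destruct (classic (j = k)) as [E|E]; [exact E|].
  exfalso. apply (Hdis j k (IZR a + /2, IZR b + /2) E).
  - apply (int_bar _ _ _ _ _ _ Hj). simpl. rewrite cell_center_shift. apply tcell_bar; exact C1.
  - apply (int_bar _ _ _ _ _ _ Hk). simpl. rewrite cell_center_shift. apply tcell_bar; exact C2.
Qed.

Lemma L_transfer I f j X Y X' Y' a b : aligned I f j X Y -> aligned I f j X' Y' ->
  tcell (a - X) (b - Y) -> tcell (a - X') (b - Y').
Proof.
  intros H1 H2 C. assert (T : image (f j) tooth (IZR a + /2, IZR b + /2)).
  { apply H1. simpl. rewrite cell_center_shift. destruct (tcell_bar _ _ C) as [B|B];
    [apply hb_tooth|apply vb_tooth]; exact B. }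
  apply H2 in T. simpl in T. rewrite cell_center_shift in T.
  apply (open_cell_tcell _ _ _ T); simpl; lra.
Qed.

Definition opencell (cx cy : Z) (r : point) : Prop :=
  IZR cx < fst r < IZR cx + 1 /\ IZR cy < snd r < IZR cy + 1.

Lemma wall I f j k X Y cx cy q r : Tiling I f -> aligned I f k X Y -> ~ tcell (cx - X) (cy - Y) ->
  Defs.interior (image (f j) tooth) q -> Defs.interior (image (f k) tooth) q ->
  opencell cx cy r -> image (f j) tooth r -> False.
Proof.
  intros HT Hk Nc Iq Kq Or Tr. destruct (classic (j = k)) as [E|E].
  - subst k. apply Hk in Tr. apply Nc. destruct Or as [O1 O2].
    apply (open_cell_tcell _ _ _ Tr); simpl; rewrite minus_IZR; lra.
  - destruct HT as [_ [_ Hdis]]. exact (Hdis j k q E Iq Kq).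
Qed.
Lemma tooth_eq (P Q : point) : fst P = fst Q -> snd P = snd Q -> (tooth P <-> tooth Q).
Proof. destruct P, Q; simpl; intros -> ->; tauto. Qed.

Lemma d1 x y : tooth (x,y) <-> tooth (x,y). Proof. tauto. Qed.
Lemma d2 x y : tooth (x,y) <-> tooth (1-x,y). Proof. unfold tooth, unit_square; simpl; split; intro; lra. Qed.
Lemma d3 x y : tooth (x,y) <-> tooth (x,1-y). Proof. unfold tooth, unit_square; simpl; split; intro; lra. Qed.
Lemma d4 x y : tooth (x,y) <-> tooth (1-x,1-y). Proof. unfold tooth, unit_square; simpl; split; intro; lra. Qed.
Lemma d5 x y : tooth (x,y) <-> tooth (y,x). Proof. unfold tooth, unit_square; simpl; split; intro; lra. Qed.
Lemma d6 x y : tooth (x,y) <-> tooth (1-y,x). Proof. unfold tooth, unit_square; simpl; split; intro; lra. Qed.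
Lemma d7 x y : tooth (x,y) <-> tooth (y,1-x). Proof. unfold tooth, unit_square; simpl; split; intro; lra. Qed.
Lemma d8 x y : tooth (x,y) <-> tooth (1-y,1-x). Proof. unfold tooth, unit_square; simpl; split; intro; lra. Qed.

Ltac d4tac := first
  [ etransitivity; [apply d1|]; apply tooth_eq; simpl; lra
  | etransitivity; [apply d2|]; apply tooth_eq; simpl; lra
  | etransitivity; [apply d3|]; apply tooth_eq; simpl; lra
  | etransitivity; [apply d4|]; apply tooth_eq; simpl; lra
  | etransitivity; [apply d5|]; apply tooth_eq; simpl; lra
  | etransitivity; [apply d6|]; apply tooth_eq; simpl; lra
  | etransitivity; [apply d7|]; apply tooth_eq; simpl; lra
  | etransitivity; [apply d8|]; apply tooth_eq; simpl; lra ].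

Lemma lim0 A B : (forall t, 0 < t < 1 -> 0 <= A + t*B) -> 0 <= A.
Proof.
  intros H. destruct (Rle_or_lt 0 A) as [|HA]; [assumption|exfalso].
  set (t := Rmin (1/2) (- A / (2 * (Rabs B + 1)))).
  assert (Hb : 0 < Rabs B + 1) by (pose proof (Rabs_pos B); lra).
  assert (Ht0 : 0 < t) by (apply Rmin_pos; [lra| apply Rdiv_lt_0_compat; lra]).
  assert (Ht1 : t <= 1/2) by apply Rmin_l.
  assert (Ht2 : t <= - A / (2 * (Rabs B + 1))) by apply Rmin_r.
  specialize (H t ltac:(lra)).
  assert (t * B <= t * Rabs B) by (apply Rmult_le_compat_l; [lra|apply Rle_abs]).
  assert (t * (Rabs B + 1) <= - A / 2).
  { apply (Rmult_le_compat_r (Rabs B + 1)) in Ht2; [|lra].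
    replace (- A / (2 * (Rabs B + 1)) * (Rabs B + 1)) with (- A / 2) in Ht2 by (field; lra). lra. }
  nra.
Qed.

Definition validdir (m x0 s hx : R) : Prop :=
  0 < hx /\ forall h, 0 < h <= hx -> m < x0 + s*h < m + 1.

Lemma valid_p m x0 : m <= x0 < m + 1 -> exists hx, validdir m x0 1 hx.
Proof. intros H. exists ((m+1-x0)/2). split; [lra|]. intros h Hh. lra. Qed.
Lemma valid_m m x0 : m < x0 <= m + 1 -> exists hx, validdir m x0 (-1) hx.
Proof. intros H. exists ((x0-m)/2). split; [lra|]. intros h Hh. lra. Qed.

Lemma cone_signs (u1 u2 v1 v2 m n x0 y0 sx sy hx hy : R) :
  sx*sx = 1 -> sy*sy = 1 -> validdir m x0 sx hx -> validdir n y0 sy hy ->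
  (forall dx dy, m < x0+dx < m+1 -> n < y0+dy < n+1 -> dx*dx+dy*dy < 1 ->
      0 <= dx*u1+dy*v1 /\ 0 <= dx*u2+dy*v2) ->
  0 <= sx*u1 /\ 0 <= sx*u2 /\ 0 <= sy*v1 /\ 0 <= sy*v2.
Proof.
  intros Sx Sy [Hx0 Vx] [Hy0 Vy] H.
  set (h := Rmin (Rmin hx hy) (1/2)).
  assert (Hh0 : 0 < h) by (apply Rmin_pos; [apply Rmin_pos|]; lra).
  assert (Hh1 : h <= hx) by (eapply Rle_trans; [apply Rmin_l|apply Rmin_l]).
  assert (Hh2 : h <= hy) by (eapply Rle_trans; [apply Rmin_l|apply Rmin_r]).
  assert (Hh3 : h <= 1/2) by apply Rmin_r.
  clearbody h.
  assert (A : forall t, 0 < t < 1 -> 0 <= sx*u1 + t*(sy*v1) /\ 0 <= sx*u2 + t*(sy*v2)).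
  { intros t Ht.
    assert (Q1 : m < x0 + sx*h < m + 1) by (apply Vx; lra).
    assert (Q2 : n < y0 + sy*(h*t) < n + 1) by (apply Vy; split; nra).
    assert (Q3 : sx*h*(sx*h) + sy*(h*t)*(sy*(h*t)) < 1).
    { replace (sx * h * (sx * h) + sy * (h * t) * (sy * (h * t))) with ((sx*sx)*(h*h) + (sy*sy)*(h*h)*(t*t)) by ring.
      rewrite Sx, Sy. assert (h*h <= 1/4) by nra.
      assert (h*h*(t*t) <= h*h) by (assert (t*t<1) by nra; nra). lra. }
    destruct (H _ _ Q1 Q2 Q3) as [P1 P2]. split.
    + replace (sx * h * u1 + sy * (h * t) * v1) with (h * (sx*u1 + t*(sy*v1))) in P1 by ring. nra.
    + replace (sx * h * u2 + sy * (h * t) * v2) with (h * (sx*u2 + t*(sy*v2))) in P2 by ring. nra. }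
  assert (B : forall t, 0 < t < 1 -> 0 <= sy*v1 + t*(sx*u1) /\ 0 <= sy*v2 + t*(sx*u2)).
  { intros t Ht.
    assert (Q1 : m < x0 + sx*(h*t) < m + 1) by (apply Vx; split; nra).
    assert (Q2 : n < y0 + sy*h < n + 1) by (apply Vy; lra).
    assert (Q3 : sx*(h*t)*(sx*(h*t)) + sy*h*(sy*h) < 1).
    { replace (sx * (h * t) * (sx * (h * t)) + sy * h * (sy * h)) with ((sx*sx)*(h*h)*(t*t) + (sy*sy)*(h*h)) by ring.
      rewrite Sx, Sy. assert (h*h <= 1/4) by nra.
      assert (h*h*(t*t) <= h*h) by (assert (t*t<1) by nra; nra). lra. }
    destruct (H _ _ Q1 Q2 Q3) as [P1 P2]. split.
    + replace (sx * (h * t) * u1 + sy * h * v1) with (h * (sy*v1 + t*(sx*u1))) in P1 by ring. nra.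
    + replace (sx * (h * t) * u2 + sy * h * v2) with (h * (sy*v2 + t*(sx*u2))) in P2 by ring. nra. }
  repeat split.
  - apply (lim0 _ (sy*v1)); intros t Ht; exact (proj1 (A t Ht)).
  - apply (lim0 _ (sy*v2)); intros t Ht; exact (proj2 (A t Ht)).
  - apply (lim0 _ (sx*u1)); intros t Ht; exact (proj1 (B t Ht)).
  - apply (lim0 _ (sx*u2)); intros t Ht; exact (proj2 (B t Ht)).
Qed.

Lemma orient U1 U2 V1 V2 : 0 <= U1 -> 0 <= U2 -> 0 <= V1 -> 0 <= V2 ->
  U1*U1+U2*U2 = 1 -> V1*V1+V2*V2 = 1 -> U1*V1+U2*V2 = 0 ->
  (U1 = 1 /\ U2 = 0 /\ V1 = 0 /\ V2 = 1) \/ (U1 = 0 /\ U2 = 1 /\ V1 = 1 /\ V2 = 0).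
Proof.
  intros. assert (E1 : U1*V1 = 0) by nra. assert (E2 : U2*V2 = 0) by nra.
  apply Rmult_integral in E1. destruct E1 as [E1|E1]; subst.
  - right. assert (U2 = 1) by nra. subst. assert (V2 = 0) by nra. subst. assert (V1 = 1) by nra. auto.
  - left. assert (V2 = 1) by nra. subst. assert (U2 = 0) by nra. subst. assert (U1 = 1) by nra. auto.
Qed.
Ltac finish_case X Y :=
  exists X, Y; split;
  [ intros p; unfold finv; rewrite ?minus_IZR, ?plus_IZR; d4tac
  | unfold finv, unit_square; simpl; lra ].

Lemma local_lemma f b1 b2 u1 u2 v1 v2 (m n cx cy : Z) x0 y0 :
  isaff f b1 b2 u1 u2 v1 v2 ->
  IZR m <= x0 <= IZR m + 1 -> IZR n <= y0 <= IZR n + 1 ->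
  f (x0,y0) = (IZR cx, IZR cy) ->
  (forall r', IZR m < fst r' < IZR m + 1 -> IZR n < snd r' < IZR n + 1 -> dist2 (x0,y0) r' < 1 ->
      IZR cx <= fst (f r') /\ IZR cy <= snd (f r')) ->
  exists X Y : Z, (forall p, tooth (finv b1 b2 u1 u2 v1 v2 p) <-> tooth (fst p - IZR X, snd p - IZR Y)) /\
     unit_square (IZR m) (IZR n) (finv b1 b2 u1 u2 v1 v2 (IZR cx + /2, IZR cy + /2)).
Proof.
  intros Haff Hx Hy Hc H.
  destruct Haff as [Hu [Hv [Huv Hf]]].
  rewrite Hf in Hc. simpl in Hc. injection Hc as Hc1 Hc2.
  assert (Hcone : forall dx dy, IZR m < x0+dx < IZR m+1 -> IZR n < y0+dy < IZR n+1 -> dx*dx+dy*dy < 1 ->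
      0 <= dx*u1+dy*v1 /\ 0 <= dx*u2+dy*v2).
  { intros dx dy Q1 Q2 Q3.
    assert (Q4 : dist2 (x0,y0) (x0+dx, y0+dy) < 1).
    { rewrite dist2_e; simpl. replace ((x0 - (x0 + dx)) * (x0 - (x0 + dx)) + (y0 - (y0 + dy)) * (y0 - (y0 + dy))) with (dx*dx+dy*dy) by ring. exact Q3. }
    destruct (H (x0+dx, y0+dy) Q1 Q2 Q4) as [A B].
    rewrite Hf in A, B; simpl in A, B. split; nra. }
  clear H.
  assert (Yv : exists sy hy, sy*sy = 1 /\ validdir (IZR n) y0 sy hy).
  { destruct (Rlt_or_le y0 (IZR n + 1)).
    - destruct (valid_p (IZR n) y0 ltac:(lra)) as [h V]. exists 1, h. split; [ring|exact V].
    - destruct (valid_m (IZR n) y0 ltac:(lra)) as [h V]. exists (-1), h. split; [ring|exact V]. }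
  assert (Xv : exists sx hx, sx*sx = 1 /\ validdir (IZR m) x0 sx hx).
  { destruct (Rlt_or_le x0 (IZR m + 1)).
    - destruct (valid_p (IZR m) x0 ltac:(lra)) as [h V]. exists 1, h. split; [ring|exact V].
    - destruct (valid_m (IZR m) x0 ltac:(lra)) as [h V]. exists (-1), h. split; [ring|exact V]. }
  assert (Xe : x0 = IZR m \/ x0 = IZR m + 1).
  { destruct (Req_dec x0 (IZR m)); [left; auto|]. destruct (Req_dec x0 (IZR m + 1)); [right; auto|].
    exfalso. destruct Yv as [sy [hy [Sy Vy]]].
    destruct (valid_p (IZR m) x0 ltac:(lra)) as [h1 V1]. destruct (valid_m (IZR m) x0 ltac:(lra)) as [h2 V2].
    destruct (cone_signs u1 u2 v1 v2 _ _ x0 y0 1 sy h1 hy ltac:(ring) Sy V1 Vy Hcone) as [a1 [a2 _]].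
    destruct (cone_signs u1 u2 v1 v2 _ _ x0 y0 (-1) sy h2 hy ltac:(ring) Sy V2 Vy Hcone) as [a3 [a4 _]].
    assert (u1 = 0) by lra. assert (u2 = 0) by lra. subst. lra. }
  assert (Ye : y0 = IZR n \/ y0 = IZR n + 1).
  { destruct (Req_dec y0 (IZR n)); [left; auto|]. destruct (Req_dec y0 (IZR n + 1)); [right; auto|].
    exfalso. destruct Xv as [sx [hx [Sx Vx]]].
    destruct (valid_p (IZR n) y0 ltac:(lra)) as [h1 V1]. destruct (valid_m (IZR n) y0 ltac:(lra)) as [h2 V2].
    destruct (cone_signs u1 u2 v1 v2 _ _ x0 y0 sx 1 hx h1 Sx ltac:(ring) Vx V1 Hcone) as [_ [_ [a1 a2]]].
    destruct (cone_signs u1 u2 v1 v2 _ _ x0 y0 sx (-1) hx h2 Sx ltac:(ring) Vx V2 Hcone) as [_ [_ [a3 a4]]].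
    assert (v1 = 0) by lra. assert (v2 = 0) by lra. subst. lra. }
  clear Xv Yv.
  assert (Norm : forall sx sy, sx*sx = 1 -> sy*sy = 1 ->
     (sx*u1)*(sx*u1)+(sx*u2)*(sx*u2) = 1 /\ (sy*v1)*(sy*v1)+(sy*v2)*(sy*v2) = 1 /\
     (sx*u1)*(sy*v1)+(sx*u2)*(sy*v2) = 0).
  { intros sx sy Sx Sy. split; [|split].
    - transitivity ((sx*sx)*(u1*u1+u2*u2)); [ring|]. rewrite Sx, Hu; ring.
    - transitivity ((sy*sy)*(v1*v1+v2*v2)); [ring|]. rewrite Sy, Hv; ring.
    - transitivity ((sx*sy)*(u1*v1+u2*v2)); [ring|]. rewrite Huv; ring. }
  destruct Xe as [Ex|Ex]; destruct Ye as [Ey|Ey].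
  - destruct (valid_p (IZR m) x0 ltac:(lra)) as [h1 V1]. destruct (valid_p (IZR n) y0 ltac:(lra)) as [h2 V2].
    destruct (cone_signs u1 u2 v1 v2 _ _ x0 y0 1 1 h1 h2 ltac:(ring) ltac:(ring) V1 V2 Hcone) as [a1 [a2 [a3 a4]]].
    destruct (Norm 1 1 ltac:(ring) ltac:(ring)) as [N1 [N2 N3]].
    destruct (orient _ _ _ _ a1 a2 a3 a4 N1 N2 N3) as [[e1 [e2 [e3 e4]]]|[e1 [e2 [e3 e4]]]].
    + assert (u1 = 1) by lra. assert (u2 = 0) by lra. assert (v1 = 0) by lra. assert (v2 = 1) by lra. subst.
      finish_case (cx - m)%Z (cy - n)%Z.
    + assert (u1 = 0) by lra. assert (u2 = 1) by lra. assert (v1 = 1) by lra. assert (v2 = 0) by lra. subst.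
      finish_case (cx - n)%Z (cy - m)%Z.
  - destruct (valid_p (IZR m) x0 ltac:(lra)) as [h1 V1]. destruct (valid_m (IZR n) y0 ltac:(lra)) as [h2 V2].
    destruct (cone_signs u1 u2 v1 v2 _ _ x0 y0 1 (-1) h1 h2 ltac:(ring) ltac:(ring) V1 V2 Hcone) as [a1 [a2 [a3 a4]]].
    destruct (Norm 1 (-1) ltac:(ring) ltac:(ring)) as [N1 [N2 N3]].
    destruct (orient _ _ _ _ a1 a2 a3 a4 N1 N2 N3) as [[e1 [e2 [e3 e4]]]|[e1 [e2 [e3 e4]]]].
    + assert (u1 = 1) by lra. assert (u2 = 0) by lra. assert (v1 = 0) by lra. assert (v2 = -1) by lra. subst.
      finish_case (cx - m)%Z (cy + n)%Z.
    + assert (u1 = 0) by lra. assert (u2 = 1) by lra. assert (v1 = -1) by lra. assert (v2 = 0) by lra. subst.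
      finish_case (cx + n)%Z (cy - m)%Z.
  - destruct (valid_m (IZR m) x0 ltac:(lra)) as [h1 V1]. destruct (valid_p (IZR n) y0 ltac:(lra)) as [h2 V2].
    destruct (cone_signs u1 u2 v1 v2 _ _ x0 y0 (-1) 1 h1 h2 ltac:(ring) ltac:(ring) V1 V2 Hcone) as [a1 [a2 [a3 a4]]].
    destruct (Norm (-1) 1 ltac:(ring) ltac:(ring)) as [N1 [N2 N3]].
    destruct (orient _ _ _ _ a1 a2 a3 a4 N1 N2 N3) as [[e1 [e2 [e3 e4]]]|[e1 [e2 [e3 e4]]]].
    + assert (u1 = -1) by lra. assert (u2 = 0) by lra. assert (v1 = 0) by lra. assert (v2 = 1) by lra. subst.
      finish_case (cx + m)%Z (cy - n)%Z.
    + assert (u1 = 0) by lra. assert (u2 = -1) by lra. assert (v1 = 1) by lra. assert (v2 = 0) by lra. subst.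
      finish_case (cx - n)%Z (cy + m)%Z.
  - destruct (valid_m (IZR m) x0 ltac:(lra)) as [h1 V1]. destruct (valid_m (IZR n) y0 ltac:(lra)) as [h2 V2].
    destruct (cone_signs u1 u2 v1 v2 _ _ x0 y0 (-1) (-1) h1 h2 ltac:(ring) ltac:(ring) V1 V2 Hcone) as [a1 [a2 [a3 a4]]].
    destruct (Norm (-1) (-1) ltac:(ring) ltac:(ring)) as [N1 [N2 N3]].
    destruct (orient _ _ _ _ a1 a2 a3 a4 N1 N2 N3) as [[e1 [e2 [e3 e4]]]|[e1 [e2 [e3 e4]]]].
    + assert (u1 = -1) by lra. assert (u2 = 0) by lra. assert (v1 = 0) by lra. assert (v2 = -1) by lra. subst.
      finish_case (cx + m)%Z (cy + n)%Z.
    + assert (u1 = 0) by lra. assert (u2 = -1) by lra. assert (v1 = -1) by lra. assert (v2 = 0) by lra. subst.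
      finish_case (cx + n)%Z (cy + m)%Z.
Qed.
Lemma pigeon (B : nat) : forall F : nat -> Z, (forall n, 0 <= F n < Z.of_nat B)%Z ->
  exists v, forall N, exists n, (N <= n)%nat /\ F n = v.
Proof.
  induction B as [|B IHB]; intros F HF.
  - specialize (HF 0%nat). simpl in HF. lia.
  - destruct (classic (forall N, exists n, (N <= n)%nat /\ F n = Z.of_nat B)) as [Y|Nn]; [eauto|].
    apply not_all_ex_not in Nn. destruct Nn as [N0 HN0].
    assert (H : forall n, (N0 <= n)%nat -> F n <> Z.of_nat B) by (intros n Hn E; apply HN0; eauto).
    destruct (IHB (fun n => F (n + N0)%nat)) as [v Hv].
    { intros n. specialize (HF (n+N0)%nat). specialize (H (n+N0)%nat ltac:(lia)).
      rewrite Nat2Z.inj_succ in HF. lia. }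
    exists v. intros N. destruct (Hv N) as [n [Hn E]]. exists (n + N0)%nat. split; [lia|exact E].
Qed.

Lemma tooth_near_center r : tooth r -> dist2 (/2,/2) r < 9.
Proof.
  rewrite dist2_e. simpl. unfold tooth, unit_square.
  intros [H|[H|[H|[H|[H|[H|[H|[H|H]]]]]]]]; nra.
Qed.

Definition closedP (P : point -> Prop) : Prop :=
  forall w, ~ P w -> exists e, 0 < e /\ forall r, dist2 w r < e^2 -> ~ P r.

Lemma closed_us a b : closedP (unit_square a b).
Proof.
  intros w Hw. unfold unit_square in Hw.
  assert (Hd : exists d, 0 < d /\ forall r, -d < fst r - fst w < d -> -d < snd r - snd w < d -> ~ unit_square a b r).
  { unfold unit_square.
    destruct (Rlt_or_le (fst w) a).
    { exists (a - fst w). split; [lra|]. intros r R1 R2 [[A1 A2] _]. lra. }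
    destruct (Rlt_or_le (a+1) (fst w)).
    { exists (fst w - (a+1)). split; [lra|]. intros r R1 R2 [[A1 A2] _]. lra. }
    destruct (Rlt_or_le (snd w) b).
    { exists (b - snd w). split; [lra|]. intros r R1 R2 [_ [A1 A2]]. lra. }
    destruct (Rlt_or_le (b+1) (snd w)).
    { exists (snd w - (b+1)). split; [lra|]. intros r R1 R2 [_ [A1 A2]]. lra. }
    exfalso. apply Hw. lra. }
  destruct Hd as [d [Hd Hr]]. exists d. split; [exact Hd|]. intros r Hdr.
  rewrite dist2_e in Hdr. simpl in Hdr. rewrite Rmult_1_r in Hdr.
  destruct (sq_bound _ _ _ Hdr Hd). apply Hr; lra.
Qed.

Lemma closed_or (P Q : point -> Prop) : closedP P -> closedP Q -> closedP (fun w => P w \/ Q w).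
Proof.
  intros HP HQ w Hw.
  destruct (HP w (fun h => Hw (or_introl h))) as [e1 [He1 H1]].
  destruct (HQ w (fun h => Hw (or_intror h))) as [e2 [He2 H2]].
  exists (Rmin e1 e2). split; [apply Rmin_pos; lra|].
  intros r Hr [A|A].
  - apply (H1 r); [|exact A]. eapply Rlt_le_trans; [exact Hr|].
    assert (Rmin e1 e2 <= e1) by apply Rmin_l. assert (0 < Rmin e1 e2) by (apply Rmin_pos; lra).
    simpl. nra.
  - apply (H2 r); [|exact A]. eapply Rlt_le_trans; [exact Hr|].
    assert (Rmin e1 e2 <= e2) by apply Rmin_r. assert (0 < Rmin e1 e2) by (apply Rmin_pos; lra).
    simpl. nra.
Qed.

Lemma closed_tooth : closedP tooth.
Proof.
  unfold tooth. repeat (apply closed_or; [apply closed_us|]). apply closed_us.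
Qed.

Lemma tooth_closed w : (forall e, 0 < e -> exists r, tooth r /\ dist2 w r < e^2) -> tooth w.
Proof.
  intros H. destruct (classic (tooth w)) as [T|T]; [exact T|].
  destruct (closed_tooth w T) as [e [He Hr]]. destruct (H e He) as [r [Tr Dr]].
  exfalso. exact (Hr r Dr Tr).
Qed.

Lemma int_image f b1 b2 u1 u2 v1 v2 r : isaff f b1 b2 u1 u2 v1 v2 ->
  (exists e, 0 < e /\ forall r', dist2 r r' < e^2 -> tooth r') ->
  Defs.interior (image f tooth) (f r).
Proof.
  intros Ha [e [He Hb]]. exists e. split; [exact He|]. intros q Hq.
  apply (image_aff _ _ _ _ _ _ _ _ _ Ha). apply Hb.
  rewrite <- (aff_dist _ _ _ _ _ _ _ r _ Ha). rewrite (aff_finv_l _ _ _ _ _ _ _ _ Ha). exact Hq.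
Qed.

Lemma para a b c s : dist2 a b < s -> dist2 b c < s -> dist2 a c < 4 * s.
Proof.
  rewrite !dist2_e. intros H1 H2.
  set (a1 := fst a - fst b) in *. set (a2 := snd a - snd b) in *.
  set (b1 := fst b - fst c) in *. set (b2 := snd b - snd c) in *.
  replace (fst a - fst c) with (a1 + b1) by (unfold a1, b1; ring).
  replace (snd a - snd c) with (a2 + b2) by (unfold a2, b2; ring).
  clearbody a1 a2 b1 b2.
  assert (0 <= (a1-b1)*(a1-b1)) by (apply Rle_0_sqr).
  assert (0 <= (a2-b2)*(a2-b2)) by (apply Rle_0_sqr).
  nra.
Qed.

Lemma ball_center (g : point -> point) : isometry g ->
  forall w, dist2 (g (/2,/2)) w < 1/4 -> image g tooth w.
Proof.
  intros Hg w Hw. destruct (iso_aff _ Hg) as [b1 [b2 [u1 [u2 [v1 [v2 Ha]]]]]].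
  apply (image_aff _ _ _ _ _ _ _ _ _ Ha).
  rewrite <- (aff_finv_l _ _ _ _ _ _ _ w Ha) in Hw. rewrite (aff_dist _ _ _ _ _ _ _ _ _ Ha) in Hw.
  set (r := finv b1 b2 u1 u2 v1 v2 w) in *. clearbody r.
  rewrite dist2_e in Hw. simpl fst in Hw. simpl snd in Hw.
  assert (Hw' : (/ 2 - fst r) * (/ 2 - fst r) + (/ 2 - snd r) * (/ 2 - snd r) < (1/2)*(1/2)) by lra.
  destruct (sq_bound _ _ _ Hw' ltac:(lra)).
  right; right; left. unfold unit_square. lra.
Qed.

Lemma sep I f j k : Tiling I f -> j <> k -> dist2 (f j (/2,/2)) (f k (/2,/2)) < 1/4 -> False.
Proof.
  intros [Hiso [_ Hdis]] Hjk Hd.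
  set (zj := f j (/2,/2)) in *. set (zk := f k (/2,/2)) in *.
  set (mid := ((fst zj + fst zk)/2, (snd zj + snd zk)/2)).
  assert (Mj : dist2 zj mid < 1/16).
  { unfold mid. rewrite dist2_e in *. simpl. nra. }
  assert (Mk : dist2 zk mid < 1/16).
  { unfold mid. rewrite dist2_e in *. simpl. nra. }
  apply (Hdis j k mid Hjk).
  - exists (1/4). split; [lra|]. intros w Hw. apply ball_center; [apply Hiso|].
    fold zj. replace (1/4) with (4 * (1/16)) by field. apply (para _ mid _); [exact Mj|]. simpl in Hw. lra.
  - exists (1/4). split; [lra|]. intros w Hw. apply ball_center; [apply Hiso|].
    fold zk. replace (1/4) with (4 * (1/16)) by field. apply (para _ mid _); [exact Mk|]. simpl in Hw. lra.
Qed.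

Definition gi (x : R) : Z := (up (4*x) + 16)%Z.

Lemma gi_bounds x : -7/2 < x < 7/2 -> (0 <= gi x < 40)%Z.
Proof.
  intros H. unfold gi. destruct (archimed (4*x)) as [A B].
  assert (C1 : (-14 < up (4*x))%Z) by (apply lt_IZR; lra).
  assert (C2 : (up (4*x) < 15)%Z) by (apply lt_IZR; lra).
  lia.
Qed.

Lemma gi_close x y : gi x = gi y -> -1/4 < x - y < 1/4.
Proof.
  unfold gi. intros E. assert (E' : up (4*x) = up (4*y)) by lia.
  destruct (archimed (4*x)) as [A B]. destruct (archimed (4*y)) as [C D]. rewrite E' in A, B.
  lra.
Qed.
Lemma dist2_sym p q : dist2 p q = dist2 q p.
Proof. unfold dist2. ring. Qed.

Lemma corner I f (HT : Tiling I f) (cx cy : Z) :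
 (forall j r q, opencell cx cy r -> image (f j) tooth r -> Defs.interior (image (f j) tooth) q ->
     dist2 q (IZR cx, IZR cy) < 1 -> ~ (IZR cx <= fst q /\ IZR cy <= snd q) -> False) ->
 exists j X Y, aligned I f j X Y /\ tcell (cx - X) (cy - Y).
Proof.
  intros HW. pose proof HT as [Hiso [Hcov Hdis]].
  set (dn := fun n : nat => / (INR n + 2)).
  assert (Dn : forall n, 0 < dn n <= 1/2 /\ dn n * (INR n + 2) = 1).
  { intro n; unfold dn; pose proof (pos_INR n). split; [split|].
    - apply Rinv_0_lt_compat; lra.
    - replace (1/2) with (/2) by field. apply Rinv_le_contravar; lra.
    - field. lra. }
  set (pn := fun n => (IZR cx + dn n, IZR cy + dn n)).
  assert (Pn : forall n, opencell cx cy (pn n)).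
  { intro n. destruct (Dn n) as [[A B] _]. unfold opencell, pn; simpl. lra. }
  assert (Pd : forall n, dist2 (IZR cx, IZR cy) (pn n) = 2 * (dn n * dn n)).
  { intro n. unfold pn, dist2; simpl. ring. }
  set (jn := fun n => proj1_sig (constructive_indefinite_description _ (Hcov (pn n)))).
  assert (Jn : forall n, image (f (jn n)) tooth (pn n)).
  { intro n. exact (proj2_sig (constructive_indefinite_description _ (Hcov (pn n)))). }
  set (z := fun j => f j (/2,/2)).
  assert (Zb : forall j p, image (f j) tooth p -> dist2 (z j) p < 9).
  { intros j p [r [Tr Er]]. subst p. unfold z. rewrite (Hiso j). apply tooth_near_center; auto. }
  assert (Gb : forall n, (0 <= gi (fst (z (jn n)) - IZR cx) < 40)%Z /\ (0 <= gi (snd (z (jn n)) - IZR cy) < 40)%Z).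
  { intro n. specialize (Zb _ _ (Jn n)). rewrite dist2_e in Zb.
    set (zz := z (jn n)) in *. clearbody zz.
    assert (Zb' : (fst zz - fst (pn n)) * (fst zz - fst (pn n)) + (snd zz - snd (pn n)) * (snd zz - snd (pn n)) < 3*3) by lra.
    destruct (sq_bound _ _ _ Zb' ltac:(lra)) as [B1 B2].
    destruct (Dn n) as [[D1 D2] _]. unfold pn in B1, B2; simpl in B1, B2.
    split; apply gi_bounds; lra. }
  set (idx := fun j => (gi (fst (z j) - IZR cx) * 40 + gi (snd (z j) - IZR cy))%Z).
  assert (Ib : forall n, (0 <= idx (jn n) < Z.of_nat 1600)%Z).
  { intro n. destruct (Gb n). unfold idx. change (Z.of_nat 1600) with 1600%Z. lia. }
  destruct (pigeon 1600 (fun n => idx (jn n)) Ib) as [v Hv].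
  destruct (Hv 0%nat) as [n0 [_ En0]].
  set (J := jn n0).
  assert (Same : forall n, idx (jn n) = v -> jn n = J).
  { intros n En. destruct (classic (jn n = J)) as [E|E]; [exact E|]. exfalso.
    apply (sep I f (jn n) J HT E). fold (z (jn n)). fold (z J).
    destruct (Gb n) as [G1 G2]. destruct (Gb n0) as [G3 G4].
    unfold idx in En, En0. fold J in G3, G4, En0.
    assert (E1 : gi (fst (z (jn n)) - IZR cx) = gi (fst (z J) - IZR cx)) by lia.
    assert (E2 : gi (snd (z (jn n)) - IZR cy) = gi (snd (z J) - IZR cy)) by lia.
    apply gi_close in E1. apply gi_close in E2.
    rewrite dist2_e. nra. }
  assert (Inf : forall N, exists n, (N <= n)%nat /\ image (f J) tooth (pn n)).
  { intro N. destruct (Hv N) as [n [Hn En]]. exists n. split; auto. rewrite <- (Same n En). apply Jn. }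
  destruct (iso_aff _ (Hiso J)) as [b1 [b2 [u1 [u2 [v1 [v2 Ha]]]]]].
  set (fi := finv b1 b2 u1 u2 v1 v2).
  set (rs := fi (IZR cx, IZR cy)).
  assert (Frs : f J rs = (IZR cx, IZR cy)) by (apply (aff_finv_l _ _ _ _ _ _ _ _ Ha)).
  assert (Trs : tooth rs).
  { apply tooth_closed. intros e He.
    destruct (INR_archimed 1 (2/e) ltac:(lra)) as [N HN]. rewrite Rmult_1_r in HN.
    destruct (Inf N) as [n [Hn Tn]]. exists (fi (pn n)). split.
    - apply (image_aff _ _ _ _ _ _ _ _ _ Ha) in Tn. exact Tn.
    - unfold rs, fi. rewrite (finv_dist _ _ _ _ _ _ _ _ _ Ha). rewrite Pd.
      assert (Hle : INR N <= INR n) by (apply le_INR; exact Hn).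
      destruct (Dn n) as [[D1 D2] D3].
      assert (Hx : 2/e * e = 2) by (field; lra).
      set (k := 2/e) in *. clearbody k. set (d := dn n) in *. clearbody d.
      assert (A1 : d * k < d * (INR n + 2)) by (apply Rmult_lt_compat_l; lra).
      assert (A2 : d * k * e < 1 * e) by (apply Rmult_lt_compat_r; lra).
      assert (A3 : 2 * d < e) by (replace (d*k*e) with (d*(k*e)) in A2 by ring; rewrite Hx in A2; lra).
      simpl. nra. }
  assert (Key : forall m n : Z, unit_square (IZR m) (IZR n) rs ->
     (forall r', unit_square (IZR m) (IZR n) r' -> tooth r') ->
     exists j X Y, aligned I f j X Y /\ tcell (cx - X) (cy - Y)).
  { intros m n [Hsx Hsy] Hsub.
    assert (Frs' : f J (fst rs, snd rs) = (IZR cx, IZR cy)) by (rewrite <- surjective_pairing; exact Frs).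
    destruct (local_lemma (f J) b1 b2 u1 u2 v1 v2 m n cx cy (fst rs) (snd rs) Ha Hsx Hsy Frs')
      as [X [Y [Hiff Hus]]].
    { intros r' O1 O2 Dr. apply NNPP. intro NQ.
      apply (HW J (pn n0) (f J r') (Pn n0) (Jn n0)); [| |exact NQ].
      - apply (int_image _ _ _ _ _ _ _ _ Ha).
        destruct (box_ball _ _ _ _ r' O1 O2) as [e [He Hb]]. exists e. split; [exact He|].
        intros r'' Hr''. apply Hsub. destruct (Hb r'' Hr''). unfold unit_square; lra.
      - rewrite <- Frs. rewrite (aff_dist _ _ _ _ _ _ _ _ _ Ha). rewrite dist2_sym.
        rewrite <- surjective_pairing in Dr. exact Dr. }
    exists J, X, Y. split.
    - intro p. rewrite (image_aff _ _ _ _ _ _ _ _ _ Ha). apply Hiff.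
    - assert (T : image (f J) tooth (IZR cx + /2, IZR cy + /2)).
      { apply (image_aff _ _ _ _ _ _ _ _ _ Ha). apply Hsub. exact Hus. }
      rewrite (image_aff _ _ _ _ _ _ _ _ _ Ha) in T. rewrite Hiff in T. simpl in T.
      rewrite cell_center_shift in T. apply (open_cell_tcell _ _ _ T); simpl; lra. }
  destruct Trs as [H|[H|[H|[H|[H|[H|[H|[H|H]]]]]]]];
  [ apply (Key (-2)%Z 0%Z) | apply (Key (-1)%Z 0%Z) | apply (Key 0%Z 0%Z) | apply (Key 1%Z 0%Z) | apply (Key 2%Z 0%Z)
  | apply (Key 0%Z (-2)%Z) | apply (Key 0%Z (-1)%Z) | apply (Key 0%Z 1%Z) | apply (Key 0%Z 2%Z) ];
  try exact H; intros r' Hr'; unfold tooth; tauto.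
Qed.
Lemma L_disj I f j k X Y X' Y' cx cy : Tiling I f -> aligned I f j X Y -> aligned I f k X' Y' ->
  tcell (cx - X) (cy - Y) -> ~ tcell (cx - X') (cy - Y') ->
  forall a b, tcell (a - X) (b - Y) -> tcell (a - X') (b - Y') -> False.
Proof.
  intros HT Hj Hk C N a b A B. assert (E := L_same _ _ _ _ _ _ _ _ _ _ HT Hj Hk A B). subst k.
  apply N. exact (L_transfer _ _ _ _ _ _ _ _ _ Hj Hk C).
Qed.

Lemma perturb_x A q e : 0 < e -> (forall q', dist2 q q' < e^2 -> A q') ->
  forall h, 0 < h -> h < e -> A (fst q + h, snd q).
Proof. intros He H h H1 H2. apply H. unfold dist2; simpl. nra. Qed.
Lemma perturb_y A q e : 0 < e -> (forall q', dist2 q q' < e^2 -> A q') ->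
  forall h, 0 < h -> h < e -> A (fst q, snd q + h).
Proof. intros He H h H1 H2. apply H. unfold dist2; simpl. nra. Qed.

Lemma near_c q (cx cy : Z) : dist2 q (IZR cx, IZR cy) < 1 ->
  IZR cx - 1 < fst q < IZR cx + 1 /\ IZR cy - 1 < snd q < IZR cy + 1.
Proof. rewrite dist2_e. simpl. intros H.
  assert (H' : (fst q - IZR cx) * (fst q - IZR cx) + (snd q - IZR cy) * (snd q - IZR cy) < 1*1) by lra.
  destruct (sq_bound _ _ 1 H' ltac:(lra)). lra. Qed.

Lemma main_aligned I f i0 : Tiling I f -> aligned I f i0 0 0 -> False.
Proof.
  intros HT H0.
  destruct (corner I f HT 1 1) as [j1 [X1 [Y1 [A1 C1]]]].
  { intros j r q Or Tr Iq Dq NQ. apply near_c in Dq. simpl in Dq.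
    apply (wall I f j i0 0 0 1 1 q r HT H0); auto; [unfold tcell; lia|].
    apply (int_bar _ _ _ _ _ _ H0). simpl.
    destruct (Rlt_or_le (fst q) 1); [right; unfold vb; simpl; lra| left; unfold hb; simpl; lra]. }
  assert (D1 := L_disj I f j1 i0 X1 Y1 0 0 1 1 HT A1 H0 C1 ltac:(unfold tcell; lia)).
  pose proof (D1 2%Z 0%Z) as E1. pose proof (D1 1%Z 0%Z) as E2. pose proof (D1 0%Z 1%Z) as E3.
  assert ((X1 = 3 /\ Y1 = 1) \/ (X1 = 1 /\ Y1 = 3))%Z as [[-> ->]|[-> ->]]
    by (unfold tcell in *; lia); clear D1 E1 E2 E3.
  -
    destruct (corner I f HT 1 2) as [j2 [X2 [Y2 [A2 C2]]]].
    { intros j r q Or Tr Iq Dq NQ. apply near_c in Dq. simpl in Dq.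
      destruct (int_open _ _ Iq) as [e [He Hb]].
      destruct (Rlt_or_le (fst q) 1).
      - apply (wall I f j i0 0 0 1 2 q r HT H0); auto; [unfold tcell; lia|].
        apply (int_bar _ _ _ _ _ _ H0). simpl. right; unfold vb; simpl; lra.
      - set (h := Rmin (e/2) (1/2)). assert (0 < h) by (apply Rmin_pos; lra).
        assert (h <= e/2) by apply Rmin_l. assert (h <= 1/2) by apply Rmin_r.
        apply (wall I f j j1 3 1 1 2 (fst q + h, snd q) r HT A1); auto; [unfold tcell; lia| |].
        + apply (perturb_x _ _ e He Hb); lra.
        + apply (int_bar _ _ _ _ _ _ A1). simpl. left; unfold hb; simpl; lra. }
    assert (D1 := L_disj I f j2 i0 X2 Y2 0 0 1 2 HT A2 H0 C2 ltac:(unfold tcell; lia)).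
    assert (D2 := L_disj I f j2 j1 X2 Y2 3 1 1 2 HT A2 A1 C2 ltac:(unfold tcell; lia)).
    pose proof (D1 2%Z 0%Z). pose proof (D1 0%Z 2%Z). pose proof (D1 1%Z 0%Z).
    pose proof (D2 3%Z 2%Z). pose proof (D2 1%Z 1%Z).
    assert (X2 = 1 /\ Y2 = 4)%Z as [-> ->] by (unfold tcell in *; lia). clear D1 D2.
    destruct (corner I f HT 2 2) as [j3 [X3 [Y3 [A3 C3]]]].
    { intros j r q Or Tr Iq Dq NQ. apply near_c in Dq. simpl in Dq.
      destruct (int_open _ _ Iq) as [e [He Hb]].
      destruct (Rlt_or_le (snd q) 2).
      - apply (wall I f j j1 3 1 2 2 q r HT A1); auto; [unfold tcell; lia|].
        apply (int_bar _ _ _ _ _ _ A1). simpl. left; unfold hb; simpl; lra.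
      - set (h := Rmin (e/2) (1/2)). assert (0 < h) by (apply Rmin_pos; lra).
        assert (h <= e/2) by apply Rmin_l. assert (h <= 1/2) by apply Rmin_r.
        apply (wall I f j j2 1 4 2 2 (fst q, snd q + h) r HT A2); auto; [unfold tcell; lia| |].
        + apply (perturb_y _ _ e He Hb); lra.
        + apply (int_bar _ _ _ _ _ _ A2). simpl. right; unfold vb; simpl; lra. }
    assert (D1 := L_disj I f j3 j1 X3 Y3 3 1 2 2 HT A3 A1 C3 ltac:(unfold tcell; lia)).
    assert (D2 := L_disj I f j3 j2 X3 Y3 1 4 2 2 HT A3 A2 C3 ltac:(unfold tcell; lia)).
    pose proof (D1 3%Z 2%Z). pose proof (D1 2%Z 1%Z). pose proof (D2 1%Z 2%Z). pose proof (D2 1%Z 4%Z).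
    unfold tcell in *; lia.
  -
    destruct (corner I f HT 2 1) as [j2 [X2 [Y2 [A2 C2]]]].
    { intros j r q Or Tr Iq Dq NQ. apply near_c in Dq. simpl in Dq.
      destruct (int_open _ _ Iq) as [e [He Hb]].
      destruct (Rlt_or_le (snd q) 1).
      - apply (wall I f j i0 0 0 2 1 q r HT H0); auto; [unfold tcell; lia|].
        apply (int_bar _ _ _ _ _ _ H0). simpl. left; unfold hb; simpl; lra.
      - set (h := Rmin (e/2) (1/2)). assert (0 < h) by (apply Rmin_pos; lra).
        assert (h <= e/2) by apply Rmin_l. assert (h <= 1/2) by apply Rmin_r.
        apply (wall I f j j1 1 3 2 1 (fst q, snd q + h) r HT A1); auto; [unfold tcell; lia| |].
        + apply (perturb_y _ _ e He Hb); lra.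
        + apply (int_bar _ _ _ _ _ _ A1). simpl. right; unfold vb; simpl; lra. }
    assert (D1 := L_disj I f j2 i0 X2 Y2 0 0 2 1 HT A2 H0 C2 ltac:(unfold tcell; lia)).
    assert (D2 := L_disj I f j2 j1 X2 Y2 1 3 2 1 HT A2 A1 C2 ltac:(unfold tcell; lia)).
    pose proof (D1 0%Z 2%Z). pose proof (D1 2%Z 0%Z). pose proof (D1 0%Z 1%Z).
    pose proof (D2 2%Z 3%Z). pose proof (D2 1%Z 1%Z).
    assert (X2 = 4 /\ Y2 = 1)%Z as [-> ->] by (unfold tcell in *; lia). clear D1 D2.
    destruct (corner I f HT 2 2) as [j3 [X3 [Y3 [A3 C3]]]].
    { intros j r q Or Tr Iq Dq NQ. apply near_c in Dq. simpl in Dq.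
      destruct (int_open _ _ Iq) as [e [He Hb]].
      destruct (Rlt_or_le (fst q) 2).
      - apply (wall I f j j1 1 3 2 2 q r HT A1); auto; [unfold tcell; lia|].
        apply (int_bar _ _ _ _ _ _ A1). simpl. right; unfold vb; simpl; lra.
      - set (h := Rmin (e/2) (1/2)). assert (0 < h) by (apply Rmin_pos; lra).
        assert (h <= e/2) by apply Rmin_l. assert (h <= 1/2) by apply Rmin_r.
        apply (wall I f j j2 4 1 2 2 (fst q + h, snd q) r HT A2); auto; [unfold tcell; lia| |].
        + apply (perturb_x _ _ e He Hb); lra.
        + apply (int_bar _ _ _ _ _ _ A2). simpl. left; unfold hb; simpl; lra. }
    assert (D1 := L_disj I f j3 j1 X3 Y3 1 3 2 2 HT A3 A1 C3 ltac:(unfold tcell; lia)).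
    assert (D2 := L_disj I f j3 j2 X3 Y3 4 1 2 2 HT A3 A2 C3 ltac:(unfold tcell; lia)).
    pose proof (D1 2%Z 3%Z). pose proof (D1 1%Z 2%Z). pose proof (D2 2%Z 1%Z). pose proof (D2 4%Z 1%Z).
    unfold tcell in *; lia.
Qed.

Theorem lemma2p1 : ~ tiles_plane tooth.
Proof.
  intros [I [f [Hiso [Hcov Hdis]]]].
  destruct (Hcov (0,0)) as [i0 _].
  destruct (normalize I f i0 (conj Hiso (conj Hcov Hdis))) as [h [HT Hh]].
  apply (main_aligned I h i0 HT).
  intros p. rewrite Hh. apply tooth_eq; simpl; lra.
Qed.
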